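(* Let $I$ be an instance and suppose $M\subseteq\mathrm{tent}(I)$ is safe with respect to $I$. Then every match in $M$ is finalizable in $I$.
   Context: An instance $I$ consists of finite disjoint sets $R$ (residents) and $H$ (hospitals), a positive integer quota $q_h$ for each $h\in H$, for each $r\in R$ a preference list of $r$ (a sequence of distinct members of $H$, not necessarily all), and for each $h\in H$ a preference list of $h$ (a sequence of distinct members of $R$). A list is complete if it contains every member of the opposite side; an instance is complete if all lists are complete. A match is a pair $(r,h)\in R\times H$. For a set $M$ of matches, $\mathrm{res}_h M=\{r:(r,h)\in M\}$, $\mathrm{res}\,M=\{r:(r,h)\in M\text{ for some }h\}$. $J$ is an extension of $I$ (same $R,H$, quotas) if every list of $J$ has the corresponding list of $I$ as a prefix; a complete extension is a completion. An event is $(r,h)^+$ (proposal) or $(r,h)^-$ (rejection). For an event sequence $\sigma$, $\mathrm{prop}(\sigma)$, $\mathrm{rej}(\sigma)$ are the sets of matches proposed/rejected in $\sigma$, $\mathrm{tent}(\sigma)=\mathrm{prop}(\sigma)\setminus\mathrm{rej}(\sigma)$, and $\mathrm{pend}_I(\sigma)$ is the set of $(r,h)\in\mathrm{tent}(\sigma)$ with $r$ not on the list of $h$ in $I$. A match $(r,h)\in M$ is ousted from $M$ in $I$ if the list of $h$ in $I$ contains at least $q_h$ residents of $\mathrm{res}_h M$ and either $r$ is not on it or $r$ is preceded on it by at least $q_h$ residents of $\mathrm{res}_h M$. $I$-feasible sequences: the empty sequence is $I$-feasible; if $\sigma$ is $I$-feasible then $\sigma+(r,h)^+$ is $I$-feasible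 if $r\notin\mathrm{res}\,\mathrm{tent}(\sigma)$, $(r,h)\notin\mathrm{prop}(\sigma)$, $h$ is on the list of $r$ in $I$ and $(r,h')\in\mathrm{rej}(\sigma)$ for every $h'$ preceding $h$ on it; and $\sigma+(r,h)^-$ is $I$-feasible if $(r,h)$ is ousted from $\mathrm{prop}(\sigma)$ in $I$ and $(r,h)\notin\mathrm{rej}(\sigma)$. All maximal $I$-feasible sequences contain the same events; $\mathrm{tent}(I),\mathrm{pend}(I)$ denote $\mathrm{tent}(\sigma),\mathrm{pend}_I(\sigma)$ for any maximal $I$-feasible $\sigma$. A match $(r,h)\in\mathrm{tent}(I)$ is finalizable in $I$ if $(r,h)\in\mathrm{tent}(J)$ for every completion $J$ of $I$. Let $M\subseteq\mathrm{tent}(I)$. A resident $r'$ is relevant to $h$ with respect to $M$ if $(r',h)\in M$ or $r'\notin\mathrm{res}\,M$. A match $(r,h)\in M$ is endangered in $M$ with respect to $I$ if: when $(r,h)\in\mathrm{tent}(I)\setminus\mathrm{pend}(I)$, the list of $h$ in $I$ contains at least $q_h$ residents preceding $r$ that are relevant to $h$ with respect to $M$; when $(r,h)\in\mathrm{pend}(I)$, the number of residents relevant to $h$ with respect to $M$ is at least $q_h+1$. $M$ is safe with respect to $I$ if no match of $M$ is endangered in $M$ with respect to $I$. *)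

(* Defs.v *)
From mathcomp Require Import all_boot.
Set Implicit Arguments. Unset Strict Implicit. Unset Printing Implicit Defensive.

Section HR.
Variables (R H : finType).

(* An instance: residents are the elements of the finite type R, hospitals
   those of H (disjoint by construction). *)
Record instance := Instance {
  quota : H -> nat;
  rpref : R -> seq H;
  hpref : H -> seq R
}.

Definition wf (I : instance) : Prop :=
  (forall h, 0 < quota I h) /\ (forall r, uniq (rpref I r)) /\
  (forall h, uniq (hpref I h)).

Definition complete (I : instance) : Prop :=
  (forall r h, h \in rpref I r) /\ (forall h r, r \in hpref I h).

Definition extension (I J : instance) : Prop :=
  (forall h, quota J h = quota I h) /\
  (forall r, prefix (rpref I r) (rpref J r)) /\
  (forall h, prefix (hpref I h) (hpref J h)).

Definition completion (I J : instance) : Prop :=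
  wf J /\ extension I J /\ complete J.

(* Events: (true, (r,h)) is the proposal (r,h)^+, (false, (r,h)) the
   rejection (r,h)^-. *)
Definition event := (bool * (R * H))%type.

Definition propS (s : seq event) : {set R * H} := [set m | (true, m) \in s].
Definition rejS (s : seq event) : {set R * H} := [set m | (false, m) \in s].
Definition tentS (s : seq event) : {set R * H} := propS s :\: rejS s.

Definition res_h (M : {set R * H}) (h : H) : {set R} := [set r | (r, h) \in M].
Definition res (M : {set R * H}) : {set R} := [set r | [exists h, (r, h) \in M]].

Definition pendS (I : instance) (s : seq event) : {set R * H} :=
  [set m in tentS s | m.1 \notin hpref I m.2].

Definition preceding (T : eqType) (x : T) (l : seq T) := take (index x l) l.

Definition ousted (I : instance) (M : {set R * H}) (r : R) (h : H) : bool :=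
  [&& (r, h) \in M,
      quota I h <= count (mem (res_h M h)) (hpref I h) &
      (r \notin hpref I h) ||
      (quota I h <= count (mem (res_h M h)) (preceding r (hpref I h)))].

Inductive feasible (I : instance) : seq event -> Prop :=
| feas_nil : feasible I [::]
| feas_prop (s : seq event) (r : R) (h : H) :
    feasible I s ->
    r \notin res (tentS s) ->
    (r, h) \notin propS s ->
    h \in rpref I r ->
    (forall h', h' \in preceding h (rpref I r) -> (r, h') \in rejS s) ->
    feasible I (rcons s (true, (r, h)))
| feas_rej (s : seq event) (r : R) (h : H) :
    feasible I s ->
    ousted I (propS s) r h ->
    (r, h) \notin rejS s ->
    feasible I (rcons s (false, (r, h))).

Definition maximal (I : instance) (s : seq event) : Prop :=
  feasible I s /\ forall e : event, ~ feasible I (rcons s e).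

(* finalizable, where tent(I) is computed from the maximal I-feasible
   sequence s *)
Definition finalizable (I : instance) (s : seq event) (m : R * H) : Prop :=
  m \in tentS s /\
  forall J : instance, completion I J ->
    forall t : seq event, maximal J t -> m \in tentS t.

Definition relevant (M : {set R * H}) (h : H) (r' : R) : bool :=
  ((r', h) \in M) || (r' \notin res M).

(* endangered / safe, with tent(I), pend(I) computed from s *)
Definition endangered (I : instance) (s : seq event) (M : {set R * H})
    (r : R) (h : H) : bool :=
  ((r, h) \in M) &&
  ( (((r, h) \in tentS s :\: pendS I s) &&
      (quota I h <= count (relevant M h) (preceding r (hpref I h))))
  || (((r, h) \in pendS I s) &&
      (quota I h + 1 <= #|[set r' | relevant M h r']|))).

Definition safe (I : instance) (s : seq event) (M : {set R * H}) : Prop :=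
  forall r h, ~~ endangered I s M r h.

End HR.

(* Main.v *)
Require Import Defs.
From mathcomp Require Import all_boot.
Set Implicit Arguments. Unset Strict Implicit. Unset Printing Implicit Defensive.

Lemma mem_take_index (T : eqType) (l : seq T) n y :
  y \in l -> (y \in take n l) = (index y l < n).
Proof.
move=> yl; have := yl; rewrite -{1 3}(cat_take_drop n l) mem_cat index_cat.
case: ifP => yin /=.
  by move=> _; apply/esym; apply: (leq_trans (_ : _ < size (take n l))); rewrite ?index_mem // size_take; case: ifP => // /negbT; rewrite -leqNgt.
move=> yd; apply/esym/negbTE; rewrite -leqNgt size_take.
case: ltnP => hn; first exact: leq_addr.
by move: yd; rewrite drop_oversize.
Qed.

Lemma mem_preceding (T : eqType) (l : seq T) x y :
  y \in l -> (y \in preceding x l) = (index y l < index x l).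
Proof. exact: mem_take_index. Qed.

Lemma preceding_cat (T : eqType) (x : T) l1 l2 :
  preceding x (l1 ++ l2) = if x \in l1 then preceding x l1 else l1 ++ preceding x l2.
Proof.
rewrite /preceding index_cat; case: ifP => xin.
  by rewrite take_cat index_mem xin.
by rewrite take_cat ltnNge leq_addr /= addKn.
Qed.

Lemma count_take (T : eqType) (a : pred T) n l : count a (take n l) <= count a l.
Proof. by rewrite -{2}(cat_take_drop n l) count_cat leq_addr. Qed.

Lemma sub_count_in (T : eqType) (a1 a2 : pred T) l :
  (forall x, x \in l -> a1 x -> a2 x) -> count a1 l <= count a2 l.
Proof.
elim: l => //= x l IH H; apply: leq_add; last by apply: IH => y yl; apply: H; rewrite inE yl orbT.
by case a1x: (a1 x) => //; rewrite (H x) // inE eqxx.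
Qed.

Section Main.
Variables (R H : finType).
Implicit Types (I J : instance R H) (s t : seq (event R H)) (M : {set R * H}).

Lemma in_propS_rcons s b m y :
  (y \in propS (rcons s (b, m))) = (b && (y == m)) || (y \in propS s).
Proof. by case: b; rewrite /propS !inE mem_rcons in_cons //= xpair_eqE eqxx. Qed.

Lemma in_rejS_rcons s b m y :
  (y \in rejS (rcons s (b, m))) = (~~ b && (y == m)) || (y \in rejS s).
Proof. by case: b; rewrite /rejS !inE mem_rcons in_cons //= xpair_eqE eqxx. Qed.

Lemma ousted_mono I M M' r h :
  M \subset M' -> ousted I M r h -> ousted I M' r h.
Proof.
move=> sub /and3P[rin c1 c2]; have sp : subpred (mem (res_h M h)) (mem (res_h M' h)).
  by move=> x; rewrite !inE => /(subsetP sub).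
apply/and3P; split; first exact: (subsetP sub).
  exact: leq_trans c1 (sub_count sp _).
case/orP: c2 => [->//|c2]; apply/orP; right; exact: leq_trans c2 (sub_count sp _).
Qed.

Lemma feas_inv I s : feasible I s ->
  [/\ (forall r h, (r, h) \in rejS s -> ousted I (propS s) r h),
      (forall r h, (r, h) \in propS s -> forall h', h' \in preceding h (rpref I r) ->
           (r, h') \in rejS s) &
      (forall r h, (r, h) \in propS s -> h \in rpref I r)].
Proof.
elim=> [|{}s r h Fs [O P Q] nres nprop hin hpre|{}s r h Fs [O P Q] oust nrej].
- by split=> r h; rewrite inE.
- have sub : propS s \subset propS (rcons s (true, (r, h))).
    by apply/subsetP => y; rewrite in_propS_rcons => ->; rewrite orbT.
  split=> x k.
  + rewrite in_rejS_rcons /= => /O; exact: ousted_mono.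
  + rewrite in_propS_rcons /= => /orP[/eqP[-> ->]|/P H1] h' /=.
      by rewrite in_rejS_rcons /=; exact: hpre.
    by rewrite in_rejS_rcons /=; exact: H1.
  + by rewrite in_propS_rcons /= => /orP[/eqP[-> ->]|/Q].
- split=> x k.
  + rewrite in_rejS_rcons /= => /orP[/eqP[-> ->]|/O]; rewrite /propS.
    * by apply: ousted_mono oust; apply/subsetP => y; rewrite !inE mem_rcons in_cons.
    * by apply: ousted_mono; apply/subsetP => y; rewrite !inE mem_rcons in_cons.
  + rewrite in_propS_rcons /= => /P H1 h' /H1.
    by rewrite in_rejS_rcons => ->; rewrite orbT.
  + by rewrite in_propS_rcons /= => /Q.
Qed.

Lemma max_notrej I s r h :
  maximal I s -> (r, h) \notin rejS s -> ~~ ousted I (propS s) r h.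
Proof. by move=> [Fs mx] nr; apply/negP => o; apply: (mx (false, (r, h))); exact: feas_rej. Qed.

End Main.

Section Mono.
Variables (R H : finType).
Implicit Types (I J : instance R H) (s t : seq (event R H)) (M : {set R * H}).

Lemma mono I J s t : extension I J -> complete J -> maximal J t -> feasible I s ->
  propS s \subset propS t /\ rejS s \subset rejS t.
Proof.
move=> [eq_q [ext_r ext_h]] [cr ch] [Ft mxt].
have [Ot Pt Qt] := feas_inv Ft.
elim=> [|{}s r h Fs [Hp Hr] nres nprop hin hpre|{}s r h Fs [Hp Hr] oust nrej].
- by split; apply/subsetP => y; rewrite inE.
- have [rest Jeq] := prefixP (ext_r r).
  have pre_eq : preceding h (rpref J r) = preceding h (rpref I r).
    by rewrite Jeq preceding_cat hin.
  have rhp : (r, h) \in propS t.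
    apply/negPn/negP => nP.
    case rt: (r \in res (tentS t)).
      move: rt; rewrite inE => /existsP [h1]; rewrite /tentS in_setD => /andP [n1 p1].
      have h1J := cr r h1; have hJ := cr r h.
      case: (ltngtP (index h1 (rpref J r)) (index h (rpref J r))) => c.
      + have : h1 \in preceding h (rpref J r) by rewrite mem_preceding.
        by rewrite pre_eq => /hpre/(subsetP Hr); rewrite (negbTE n1).
      + have : h \in preceding h1 (rpref J r) by rewrite mem_preceding.
        move=> /(Pt _ _ p1)/Ot/and3P [pp _ _]; by rewrite pp in nP.
      + by have e := index_inj h h1J hJ c; rewrite -e p1 in nP.
    apply: (mxt (true, (r, h))); apply: feas_prop => //; first by rewrite rt.
    by move=> h'; rewrite pre_eq => /hpre/(subsetP Hr).
  split; apply/subsetP => y.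
    by rewrite in_propS_rcons /= => /orP[/eqP->//|/(subsetP Hp)].
  by rewrite in_rejS_rcons /= => /(subsetP Hr).
- have rhr : (r, h) \in rejS t.
    apply/negPn/negP => nR.
    apply: (mxt (false, (r, h))); apply: feas_rej => //.
    have sp : subpred (mem (res_h (propS s) h)) (mem (res_h (propS t) h)).
      by move=> x; have := subsetP Hp (x, h); rewrite !inE.
    have [rest Jeq] := prefixP (ext_h h).
    case/and3P: oust => rp c1 c2.
    apply/and3P; split; first exact: (subsetP Hp).
      rewrite eq_q Jeq count_cat; apply: leq_trans c1 _.
      exact: leq_trans (sub_count sp _) (leq_addr _ _).
    apply/orP; right; rewrite eq_q Jeq preceding_cat.
    case: ifP => xin.
      by rewrite xin /= in c2; exact: leq_trans c2 (sub_count sp _).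
    rewrite count_cat; apply: leq_trans c1 _.
    exact: leq_trans (sub_count sp _) (leq_addr _ _).
  split; apply/subsetP => y.
    by rewrite in_propS_rcons /= => /(subsetP Hp).
  by rewrite in_rejS_rcons /= => /orP[/eqP->//|/(subsetP Hr)].
Qed.

End Mono.

Section NoRej.
Variables (R H : finType).
Implicit Types (I J : instance R H) (s t : seq (event R H)) (M : {set R * H}).

Lemma resE M h x : (x \in res_h M h) = ((x, h) \in M).
Proof. by rewrite inE. Qed.

Lemma norej I J s t M : extension I J -> complete J -> wf J -> maximal I s ->
  M \subset tentS s -> safe I s M -> feasible J t ->
  forall m, m \in M -> m \notin rejS t.
Proof.
move=> [eq_q [ext_r ext_h]] [cr ch] [_ [_ uJ]] mxs sub sf.
have [Os Ps Qs] := feas_inv mxs.1.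
elim=> [|{}t r h Ft IH _ _ _ _ | {}t r h Ft IH oust nrej] m mM.
- by rewrite inE.
- by rewrite in_rejS_rcons /= IH.
rewrite in_rejS_rcons /= negb_or (IH m mM) andbT.
apply/negP => /eqP em; subst m.
have [Ot Pt Qt] := feas_inv Ft.
have rhT : (r, h) \in tentS s := subsetP sub _ mM.
move: (rhT); rewrite /tentS in_setD => /andP [rhnr rhp].
have NO := max_notrej mxs rhnr.
have K : forall x, (x, h) \in propS t -> relevant M h x || ((x, h) \in rejS s).
  move=> x xp; rewrite /relevant.
  case xhM: ((x, h) \in M) => //=.
  case xres: (x \in res M) => //=.
  move: xres; rewrite inE => /existsP [h2 x2M].
  have h2h : h2 != h by apply/eqP => e; rewrite e xhM in x2M.
  have x2T : (x, h2) \in tentS s := subsetP sub _ x2M.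
  move: (x2T); rewrite /tentS in_setD => /andP [_ x2p].
  have h2I := Qs _ _ x2p.
  have [rest Jeq] := prefixP (ext_r x).
  case: (ltngtP (index h2 (rpref J x)) (index h (rpref J x))) => c.
  + have : h2 \in preceding h (rpref J x) by rewrite mem_preceding.
    by move=> /(Pt _ _ xp) xr; have := IH _ x2M; rewrite xr.
  + have : h \in preceding h2 (rpref J x) by rewrite mem_preceding.
    by rewrite Jeq preceding_cat h2I => /(Ps _ _ x2p) ->.
  + by have e := index_inj h (cr x h2) (cr x h) c; rewrite e eqxx in h2h.
case/and3P: oust => rpt c1 c2.
rewrite ch /= eq_q in c2.
have [rest Jeq] := prefixP (ext_h h).
apply: (negP (sf r h)); rewrite /endangered mM /=.
case rI: (r \in hpref I h).
- apply/orP; left; apply/andP; split.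
    by rewrite in_setD rhT andbT /pendS in_set /= rI andbF.
  move: c2; rewrite Jeq preceding_cat rI => c2.
  apply: leq_trans c2 _; apply: sub_count_in => x xL /=.
  rewrite resE => xp.
  case/orP: (K x xp) => // xr; exfalso.
  have /and3P [_ d1 d2] := Os _ _ xr.
  have xI : x \in hpref I h := mem_take xL.
  rewrite xI /= in d2.
  move/negP: NO; apply; apply/and3P; split => //; apply/orP; right.
  apply: leq_trans d2 _.
  have lt : index x (hpref I h) < index r (hpref I h) by rewrite -mem_preceding.
  rewrite /preceding -(take_takel (hpref I h) (ltnW lt)); exact: count_take.
- apply/orP; right; apply/andP; split.
    by rewrite /pendS in_set /= rhT rI.
  set L := preceding r (hpref J h) in c2.
  have cnt : quota I h <= count (relevant M h) L.
    apply: leq_trans c2 _; apply: sub_count_in => x xL /=.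
    rewrite resE => xp.
    case/orP: (K x xp) => // xr; exfalso.
    have /and3P [_ d1 _] := Os _ _ xr.
    by move/negP: NO; apply; apply/and3P; split => //; rewrite rI.
  have uL : uniq L := take_uniq _ (uJ h).
  have rL : r \notin L by rewrite mem_preceding ?ltnn // ch.
  have U : uniq (r :: filter (relevant M h) L).
    by rewrite /= mem_filter (negbTE rL) andbF /= filter_uniq.
  rewrite addn1; apply: leq_trans (_ : size (r :: filter (relevant M h) L) <= _).
    by rewrite /= size_filter ltnS.
  move/card_uniqP: U => <-; apply: subset_leq_card; apply/subsetP => y.
  rewrite in_cons mem_filter inE => /orP[/eqP->|/andP[yr _]] //.
  by rewrite /relevant mM.
Qed.

End NoRej.

Theorem proposition8 (R H : finType) (I : instance R H) (s : seq (event R H))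
    (M : {set R * H}) :
  wf I -> maximal I s -> M \subset tentS s -> safe I s M ->
  forall m, m \in M -> finalizable I s m.
Proof.
move=> wfI mxs sub sf m mM; split; first exact: (subsetP sub).
move=> J [wfJ [ext cmp]] t mxt.
have [Hp _] := mono ext cmp mxt mxs.1.
rewrite /tentS in_setD (norej ext cmp wfJ mxs sub sf mxt.1 mM) /=.
apply: (subsetP Hp); move: (subsetP sub _ mM); rewrite /tentS in_setD => /andP[].
done.
Qed.
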